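(* Let $\Bbbk$ be algebraically closed, $T$ a torus acting linearly on a finite-dimensional $\Bbbk$-vector space $V$, $X\subseteq\mathbb PV$ a closed $T$-invariant subscheme with $X^T$ finite, and $S:\mathbb G_m\to T$ with $X^S=X^T$. Let $F\subseteq X^T$ be the set of supporting fixed points. Then $X=\overline{\bigcup_{f\in F}X_f}=\bigcup_{f\in F}\overline{X_f}$. In particular, if $X$ has only one supporting fixed point $f$, then $X=\overline{X_f}$.
   Context: For $f\in X^T$, $X_f=\{x\in X:\lim_{z\to0}S(z)\cdot x=f\}$ is the B-B stratum. A point $f\in X^T$ is a supporting fixed point if $X_f$ contains a nonempty open subset of $X$. *)

(* Defs.v *)
From HB Require Import structures.
From mathcomp Require Import all_boot all_order all_algebra.
From mathcomp Require Import mpoly.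
Set Implicit Arguments. Unset Strict Implicit. Unset Printing Implicit Defensive.
Import Order.TTheory GRing.Theory Num.Theory.
Local Open Scope ring_scope.

(* V = k^n with a basis of T-weight vectors; T = G_m^r; points of PV are
   represented by nonzero vectors, sets of points by scaling-invariant
   predicates on vectors (all sets below are such cones). *)
Section BB.
Variables (k : closedFieldType) (n r : nat).

Definition vec := 'I_n -> k.

Definition nonzero (v : vec) : Prop := exists i, v i != 0.

Definition proj_eq (u v : vec) : Prop :=
  exists c : k, c != 0 /\ forall i, u i = c * v i.

Definition in_torus (t : 'I_r -> k) : Prop := forall j, t j != 0.

Definition act (w : 'I_n -> 'I_r -> int) (t : 'I_r -> k) (v : vec) : vec :=
  fun i => (\prod_(j < r) (t j) ^ (w i j)) * v i.

Definition cochar (s : 'I_r -> int) (z : k) : 'I_r -> k := fun j => z ^ (s j).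

Definition homogeneous (p : {mpoly k[n]}) : Prop :=
  exists d, p \is [in k[n], d.-homog].

Definition zeroset (I : {mpoly k[n]} -> Prop) (v : vec) : Prop :=
  nonzero v /\ forall p, I p -> p.@[v] = 0.

Definition pclosed (C : vec -> Prop) : Prop :=
  exists I : {mpoly k[n]} -> Prop,
    (forall p, I p -> homogeneous p) /\ forall v, C v <-> zeroset I v.

Definition zclosure (A : vec -> Prop) (v : vec) : Prop :=
  nonzero v /\ forall C, pclosed C -> (forall x, A x -> C x) -> C v.

Definition fixedT (w : 'I_n -> 'I_r -> int) (X : vec -> Prop) (v : vec) : Prop :=
  X v /\ forall t, in_torus t -> proj_eq (act w t v) v.

Definition fixedS (w : 'I_n -> 'I_r -> int) (s : 'I_r -> int)
    (X : vec -> Prop) (v : vec) : Prop :=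
  X v /\ forall z : k, z != 0 -> proj_eq (act w (cochar s z) v) v.

(* lim_{z -> 0} S(z).x = f : the orbit map G_m -> PV, z |-> S(z).x, extends
   to a morphism A^1 -> PV (given by polynomials gamma without common zero at
   0) whose value at 0 is f *)
Definition is_limit (w : 'I_n -> 'I_r -> int) (s : 'I_r -> int) (x f : vec) : Prop :=
  exists gamma : 'I_n -> {poly k},
    (forall z : k, z != 0 ->
        proj_eq (fun i => (gamma i).[z]) (act w (cochar s z) x)) /\
    nonzero (fun i => (gamma i).[0]) /\
    proj_eq (fun i => (gamma i).[0]) f.

Definition stratum (w : 'I_n -> 'I_r -> int) (s : 'I_r -> int)
    (X : vec -> Prop) (f : vec) (x : vec) : Prop :=
  X x /\ is_limit w s x f.

Definition supporting (w : 'I_n -> 'I_r -> int) (s : 'I_r -> int)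
    (X : vec -> Prop) (f : vec) : Prop :=
  fixedT w X f /\
  exists C, pclosed C /\ (exists x, X x /\ ~ C x) /\
    forall x, X x -> ~ C x -> stratum w s X f x.

End BB.

(* Main.v *)
Require Import Defs.
From HB Require Import structures.
From mathcomp Require Import all_boot all_order all_algebra.
From mathcomp Require Import mpoly.
From Stdlib Require Import Classical.
Import Order.TTheory GRing.Theory Num.Theory.
Local Open Scope ring_scope.
Set Implicit Arguments. Unset Strict Implicit. Unset Printing Implicit Defensive.

Section Generic.
Variables (k : closedFieldType) (n : nat).

Lemma proj_eq_trans (u v x : vec k n) :
  proj_eq u v -> proj_eq v x -> proj_eq u x.
Proof.
move=> [c [c0 hc]] [d [d0 hd]]; exists (c * d); split; first by rewrite mulf_neq0.
by move=> i; rewrite hc hd mulrA.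
Qed.

Lemma proj_eq_sym (u v : vec k n) : proj_eq u v -> proj_eq v u.
Proof.
move=> [c [c0 hc]]; exists c^-1; split; first by rewrite invr_eq0.
by move=> i; rewrite hc mulrA mulVf // mul1r.
Qed.

Lemma proj_eq_refl (u : vec k n) : proj_eq u u.
Proof. by exists 1; split; [exact: oner_neq0 | move=> i; rewrite mul1r]. Qed.

Lemma pclosed_union (A B : vec k n -> Prop) :
  pclosed A -> pclosed B -> pclosed (fun v => A v \/ B v).
Proof.
move=> [I1 [h1 e1]] [I2 [h2 e2]].
exists (fun p => exists p1 p2, I1 p1 /\ I2 p2 /\ p = p1 * p2); split.
  move=> p [p1 [p2 [i1 [i2 ->]]]].
  have [d1 hd1] := h1 _ i1; have [d2 hd2] := h2 _ i2.
  by exists (d1 + d2)%N; apply: dhomogM.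
move=> v; split.
  case=> [/e1 [nz hz]|/e2 [nz hz]]; split=> //; move=> p [p1 [p2 [i1 [i2 ->]]]];
    by rewrite mevalM ?(hz _ i1) ?(hz _ i2) ?mul0r ?mulr0.
move=> [nz hz].
case: (classic (A v)) => [|nA]; first by left.
right; apply/e2; split=> // p2 i2.
have : ~ zeroset I1 v by move=> /e1.
move=> nz1; apply: NNPP => hp2; apply: nz1; split=> // p1 i1.
apply: NNPP => hp1.
have := hz (p1 * p2) (ex_intro _ p1 (ex_intro _ p2 (conj i1 (conj i2 erefl)))).
rewrite mevalM => /eqP; rewrite mulf_eq0 => /orP[] /eqP //.
Qed.

Lemma pclosed_empty : pclosed (fun _ : vec k n => False).
Proof.
exists (fun p => p = 1); split.
  by move=> p ->; exists 0%N; exact: dhomog1.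
move=> v; split=> // [[_ h]].
by have := h 1 erefl; rewrite meval1 => /eqP; rewrite oner_eq0.
Qed.

Lemma zclosure_sub (X A : vec k n -> Prop) :
  pclosed X -> (forall y, A y -> X y) -> forall x, zclosure A x -> X x.
Proof. by move=> cX hA x [_ h]; apply: h. Qed.

Lemma homog_scale (p : {mpoly k[n]}) d (c : k) (v : vec k n) :
  p \is [in k[n], d.-homog] -> p.@[fun i => c * v i] = c ^+ d * p.@[v].
Proof.
move=> hp; rewrite !mevalE big_distrr /= big_seq [RHS]big_seq.
apply: eq_bigr => m hm.
have hd : (\sum_(i < n) m i)%N = d by rewrite -mdegE; exact: (dhomog_mf hp hm).
rewrite (eq_bigr (fun i => c ^+ m i * v i ^+ m i)); last by move=> i _; rewrite exprMn.
rewrite big_split /= prodrXr -hd.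
by rewrite mulrCA.
Qed.

Lemma poly_inf_zero (Q : {poly k}) : (forall z, z != 0 -> Q.[z] = 0) -> Q = 0.
Proof.
move=> hQ.
have fresh : forall s : seq k, exists x, x != 0 /\ x \notin s.
  move=> s; set P := 'X * \prod_(a <- s) ('X - a%:P) - 1.
  have sP : size P = (size s).+2.
    rewrite /P size_polyDl; last first.
      by rewrite size_polyN size_poly1 mulrC size_mulX ?size_prod_XsubC //
         -size_poly_eq0 size_prod_XsubC.
    by rewrite mulrC size_mulX ?size_prod_XsubC // -size_poly_eq0 size_prod_XsubC.
  have /closed_rootP [x rx] : size P != 1 by rewrite sP.
  move: rx; rewrite /root /P hornerD hornerN hornerM hornerX horner_prod hornerC.
  rewrite subr_eq0 => /eqP hx.
  exists x; split.
    by apply/eqP=> x0; move: hx; rewrite x0 mul0r => /eqP; rewrite eq_sym oner_eq0.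
  apply/negP=> xs.
  have : \prod_(a <- s) ('X - a%:P).[x] == 0.
    rewrite prodf_seq_eq0; apply/hasP; exists x => //.
    by rewrite hornerD hornerN hornerX hornerC subrr eqxx.
  by move/eqP=> h0; move: hx; rewrite h0 mulr0 => /eqP; rewrite eq_sym oner_eq0.
have seqs : forall N, exists s : seq k, [/\ uniq s, size s = N & all (fun x => x != 0) s].
  elim=> [|N [s [us ss as0]]]; first by exists [::].
  have [x [x0 xs]] := fresh s.
  by exists (x :: s); rewrite /= xs us ss x0 as0.
apply: NNPP => nQ.
have [s [us ss as0]] := seqs (size Q).
have H := max_poly_roots (p := Q) (rs := s); rewrite ss ltnn in H.
suff : false by [].
apply: H => //; first by apply/eqP.
apply/allP => z zs; apply/eqP/hQ.
exact: (allP as0).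
Qed.

End Generic.

Section Limit.
Variables (k : closedFieldType) (n r : nat)
    (w : 'I_n -> 'I_r -> int) (s : 'I_r -> int)
    (I : {mpoly k[n]} -> Prop)
    (hI : forall p, I p -> homogeneous p)
    (hinv : forall t, in_torus t -> forall v,
        zeroset I v -> zeroset I (act w t v))
    (hS : forall v, fixedS w s (zeroset I) v <-> fixedT w (zeroset I) v).

Definition wt (i : 'I_n) : int := \sum_(j < r) s j * w i j.

Definition piw (i0 : 'I_n) (x : vec k n) : vec k n :=
  fun i => if wt i == wt i0 then x i else 0.

Lemma act_cochar (z : k) (x : vec k n) i :
  z != 0 -> act w (cochar s z) x i = z ^ wt i * x i.
Proof.
move=> z0; rewrite /act /cochar /wt; congr (_ * _).
elim/big_rec2: _ => [|j y1 y2 _ ->]; first by rewrite expr0z.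
by rewrite exprz_exp expfzDr.
Qed.

Lemma torus_cochar (z : k) : z != 0 -> in_torus (cochar s z).
Proof. by move=> z0 j; rewrite /cochar expfz_neq0. Qed.

Lemma limit_lemma (i0 : 'I_n) (x : vec k n) :
  zeroset I x -> (forall i, wt i < wt i0 -> x i = 0) ->
  (exists i, wt i = wt i0 /\ x i != 0) ->
  [/\ is_limit w s x (piw i0 x), zeroset I (piw i0 x) & fixedT w (zeroset I) (piw i0 x)].
Proof.
move=> hx hlow [i1 [wi1 xi1]].
pose gamma i : {poly k} := (x i)%:P * 'X^(absz (wt i - wt i0)).
have ge : forall i, x i != 0 -> wt i0 <= wt i.
  move=> i xi0; rewrite leNgt; apply/negP => lt.
  by move: xi0; rewrite hlow // eqxx.
have G1 : forall z, z != 0 -> forall i,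
    (gamma i).[z] = z ^ (- wt i0) * act w (cochar s z) x i.
  move=> z z0 i; rewrite hornerCM hornerXn act_cochar //.
  case: (eqVneq (x i) 0) => [->|xi0]; first by rewrite mul0r !mulr0.
  have -> : z ^+ absz (wt i - wt i0) = z ^ (wt i - wt i0).
    by rewrite exprnP gez0_abs // subr_ge0 ge.
  by rewrite expfzDr // mulrC (mulrC (z ^ wt i)) -mulrA.
have G0 : forall i, (gamma i).[0] = piw i0 x i.
  move=> i; rewrite hornerCM hornerXn expr0n /piw.
  case: (eqVneq (x i) 0) => [->|xi0]; first by rewrite mul0r; case: ifP.
  case: (eqVneq (wt i) (wt i0)) => [->|ne]; first by rewrite subrr /= mulr1.
  suff -> : (absz (wt i - wt i0) == 0%N) = false by rewrite mulr0.
  by apply/negbTE; rewrite absz_eq0 subr_eq0.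
have nzpi : nonzero (piw i0 x).
  by exists i1; rewrite /piw wi1 eqxx.
have Xpi : zeroset I (piw i0 x).
  split=> // p Ip.
  have [d hd] := hI Ip.
  pose Q := \sum_(m <- msupp p) p@_m *: \prod_(i < n) (gamma i) ^+ (m i).
  have HQ : forall z, Q.[z] = p.@[fun i => (gamma i).[z]].
    move=> z; rewrite mevalE horner_sum; apply: eq_bigr => m _.
    rewrite hornerZ horner_prod; congr (_ * _); apply: eq_bigr => i _.
    by rewrite horner_exp.
  have Q0 : Q = 0.
    apply: poly_inf_zero => z z0.
    rewrite HQ (meval_eq _ (G1 z z0)) (homog_scale _ _ hd).
    have [_ h] := hinv (torus_cochar z0) hx.
    by rewrite h // mulr0.
  by move: (HQ 0); rewrite Q0 horner0 (meval_eq _ G0) => <-.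
split=> //.
  exists gamma; split; [|split].
  - move=> z z0; exists (z ^ (- wt i0)); split; first by rewrite expfz_neq0.
    by move=> i; apply: G1.
  - by exists i1; rewrite /= G0 /piw wi1 eqxx.
  - by exists 1; split; [exact: oner_neq0 | move=> i; rewrite G0 mul1r].
apply/hS; split=> // z z0.
exists (z ^ wt i0); split; first by rewrite expfz_neq0.
move=> i; rewrite act_cochar // /piw; case: eqP => [->|]; by rewrite ?mulr0.
Qed.

End Limit.

Lemma is_limit_trans (k : closedFieldType) (n r : nat)
    (w : 'I_n -> 'I_r -> int) (s : 'I_r -> int) (x g f : vec k n) :
  is_limit w s x g -> proj_eq g f -> is_limit w s x f.
Proof.
move=> [gamma [h1 [h2 h3]]] e; exists gamma; split=> //; split=> //.
exact: proj_eq_trans h3 e.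
Qed.

Lemma stratum_trans (k : closedFieldType) (n r : nat)
    (w : 'I_n -> 'I_r -> int) (s : 'I_r -> int) X (x g f : vec k n) :
  stratum w s X g x -> proj_eq g f -> stratum w s X f x.
Proof. by move=> [Xx hl] e; split=> //; exact: is_limit_trans hl e. Qed.

Lemma dhomogXi (k : closedFieldType) (n : nat) (i : 'I_n) :
  ('X_i : {mpoly k[n]}) \is [in k[n], 1.-homog].
Proof. by rewrite dhomogX; apply/eqP; exact: mdeg1. Qed.

Section Pieces.
Variables (k : closedFieldType) (n r : nat)
    (w : 'I_n -> 'I_r -> int) (s : 'I_r -> int)
    (I : {mpoly k[n]} -> Prop)
    (hI : forall p, I p -> homogeneous p)
    (hinv : forall t, in_torus t -> forall v,
        zeroset I v -> zeroset I (act w t v))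
    (hS : forall v, fixedS w s (zeroset I) v <-> fixedT w (zeroset I) v)
    (m : nat) (l : 'I_m -> vec k n)
    (hl : forall v, fixedT w (zeroset I) v -> exists j, proj_eq v (l j)).

Local Notation wt := (wt w s).
Local Notation X := (zeroset I).

Lemma exists_min (x : vec k n) : nonzero x ->
  exists i0, x i0 != 0 /\ forall i, x i != 0 -> wt i0 <= wt i.
Proof.
have gen : forall sq : seq 'I_n, (exists i, i \in sq /\ x i != 0) ->
    exists i0, x i0 != 0 /\ forall i, i \in sq -> x i != 0 -> wt i0 <= wt i.
  elim=> [|j sq IH]; first by move=> [i []].
  move=> [ij [ijs xij]]; case: (classic (exists i, i \in sq /\ x i != 0)) => [ex|nex].
    have [i0 [xi0 hi0]] := IH ex.
    case: (boolP ((x j != 0) && (wt j < wt i0))) => [/andP[xj lt]|hj].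
      exists j; split=> // i; rewrite in_cons => /orP[/eqP->//|isq] xi.
      exact: ltW (lt_le_trans lt (hi0 i isq xi)).
    exists i0; split=> // i; rewrite in_cons => /orP[/eqP->|isq] xi; last exact: hi0.
    by move: hj; rewrite xi /= -leNgt.
  have xj : x j != 0.
    move: ijs; rewrite in_cons => /orP[/eqP<-//|ijs].
    by case: nex; exists ij.
  exists j; split=> // i; rewrite in_cons => /orP[/eqP->//|isq] xi.
  by case: nex; exists i.
move=> [i xi].
have [i0 [xi0 h]] := gen (enum 'I_n) (ex_intro _ i (conj (mem_enum _ i) xi)).
by exists i0; split=> // i' xi'; apply: h; rewrite ?mem_enum.
Qed.


Local Notation PT := ('I_n * 'I_n * 'I_m)%type.

Definition Zp (q : PT) (v : vec k n) : Prop :=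
  let: (i0, i1, j) := q in
  nonzero v /\ (wt i1 = wt i0 /\ l j i1 != 0) /\
  (forall i, wt i < wt i0 -> v i = 0) /\
  (forall i, wt i = wt i0 -> v i * l j i1 = v i1 * l j i).

Definition Dp (q : PT) (v : vec k n) : Prop :=
  let: (i0, i1, j) := q in
  nonzero v /\ forall i, wt i = wt i0 -> v i = 0.

Lemma Dp_closed q : pclosed (Dp q).
Proof.
case: q => [[i0 i1] j] /=.
exists (fun p => exists i, wt i = wt i0 /\ p = 'X_i); split.
  by move=> p [i [_ ->]]; exists 1%N; exact: dhomogXi.
move=> v; split.
  by move=> [nz h]; split=> // p [i [hi ->]]; rewrite mevalXU h.
move=> [nz h]; split=> // i hi.
by have := h 'X_i (ex_intro _ i (conj hi erefl)); rewrite mevalXU.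
Qed.

Lemma Zp_closed q : pclosed (Zp q).
Proof.
case: q => [[i0 i1] j] /=.
exists (fun p => (exists i, wt i < wt i0 /\ p = 'X_i) \/
   (exists i, wt i = wt i0 /\ p = l j i1 *: 'X_i - l j i *: 'X_i1) \/
   (~ (wt i1 = wt i0 /\ l j i1 != 0) /\ p = 1)); split.
  move=> p [[i [_ ->]]|[[i [_ ->]]|[_ ->]]].
  - by exists 1%N; exact: dhomogXi.
  - exists 1%N; apply: dhomogD; first exact/dhomogZ/dhomogXi.
    by rewrite dhomogN; exact/dhomogZ/dhomogXi.
  - by exists 0%N; exact: dhomog1.
move=> v; split.
  move=> [nz [cnd [hlow hrel]]]; split=> // p [[i [hi ->]]|[[i [hi ->]]|[nc _]]].
  - by rewrite mevalXU hlow.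
  - rewrite mevalB !mevalZ !mevalXU; apply/eqP; rewrite subr_eq0; apply/eqP.
    by rewrite mulrC hrel // mulrC.
  - by case: nc.
move=> [nz h]; split=> //.
have cnd : wt i1 = wt i0 /\ l j i1 != 0.
  apply: NNPP => nc.
  have := h 1 (or_intror (or_intror (conj nc erefl))).
  by rewrite meval1 => /eqP; rewrite oner_eq0.
split=> //; split.
  by move=> i hi; have := h 'X_i (or_introl (ex_intro _ i (conj hi erefl))); rewrite mevalXU.
move=> i hi.
have := h (l j i1 *: 'X_i - l j i *: 'X_i1)
  (or_intror (or_introl (ex_intro _ i (conj hi erefl)))).
rewrite mevalB !mevalZ !mevalXU => /eqP; rewrite subr_eq0 => /eqP.
by rewrite mulrC => ->; rewrite mulrC.
Qed.

Lemma cover (x : vec k n) : X x -> exists q, Zp q x /\ ~ Dp q x.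
Proof.
move=> Xx; have [nz _] := Xx.
have [i0 [xi0 hmin]] := exists_min nz.
have hlow : forall i, wt i < wt i0 -> x i = 0.
  move=> i lt; apply/eqP; apply: contraTT lt => xi.
  by rewrite -leNgt hmin.
have [lim Xp fp] := limit_lemma hI hinv hS Xx hlow (ex_intro _ i0 (conj erefl xi0)).
have [j [c [c0 hc]]] := hl fp.
have pii : forall i, wt i = wt i0 -> x i = c * l j i.
  by move=> i hi; rewrite -hc /piw hi eqxx.
have lj0 : l j i0 != 0.
  by apply: contraNneq xi0 => e; rewrite pii // e mulr0.
exists (i0, i0, j); split.
  split=> //; split=> //; split=> // i hi.
  by rewrite !pii // mulrAC.
by move=> [_ h]; move: xi0; rewrite h // eqxx.
Qed.

Lemma piece q (x0 : vec k n) : X x0 -> Zp q x0 -> ~ Dp q x0 ->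
  exists f, fixedT w X f /\
    forall x, X x -> Zp q x -> ~ Dp q x -> stratum w s X f x.
Proof.
case: q => [[i0 i1] j] /=.
have key : forall x, X x -> Zp (i0, i1, j) x -> ~ Dp (i0, i1, j) x ->
   [/\ x i1 != 0, is_limit w s x (piw w s i0 x) & fixedT w X (piw w s i0 x)].
  move=> x Xx [nz [[e1 lj] [hlow hrel]]] nD.
  have xi1 : x i1 != 0.
    apply/negP => /eqP xi10; apply: nD; split=> // i hi.
    by move: (hrel i hi); rewrite xi10 mul0r => /eqP; rewrite mulf_eq0 (negbTE lj) orbF => /eqP.
  have [lim Xp fp] := limit_lemma hI hinv hS Xx hlow (ex_intro _ i1 (conj e1 xi1)).
  by split.
move=> X0 Z0 D0.
have [x01 _ fp0] := key _ X0 Z0 D0.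
exists (piw w s i0 x0); split=> // x Xx Zx Dx.
have [xi1 lim _] := key _ Xx Zx Dx.
split=> //; apply: is_limit_trans lim _.
have [_ [[e1 lj] [_ hrel0]]] := Z0; have [_ [_ [_ hrel]]] := Zx.
exists (x i1 / x0 i1); split; first by rewrite mulf_neq0 ?invr_eq0.
move=> i; rewrite /piw; case: eqP => [hi|_]; last by rewrite mulr0.
apply: (mulIf lj); rewrite hrel // -(mulrA (x i1 / x0 i1)) hrel0 // mulrA divfK //.
Qed.

Lemma topo (Q : seq PT) : forall C, pclosed C -> (exists x, X x /\ ~ C x) ->
  (forall x, X x -> ~ C x -> exists q, q \in Q /\ Zp q x /\ ~ Dp q x) ->
  exists f, supporting w s X f /\ exists y, stratum w s X f y /\ ~ C y.
Proof.
elim: Q => [|q Q IH] C cC [x [Xx nCx]] cov.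
  by have [q [] ] := cov x Xx nCx.
case: (classic (exists x, X x /\ ~ C x /\ ~ Zp q x)) => [[x1 [X1 [nC1 nZ1]]]|allZ].
  have cov' : forall y, X y -> ~ (C y \/ Zp q y) ->
      exists q', q' \in Q /\ Zp q' y /\ ~ Dp q' y.
    move=> y Xy nCy.
    have [q' [q'Q [Zy Dy]]] := cov y Xy (fun c => nCy (or_introl c)).
    move: q'Q; rewrite in_cons => /orP[/eqP eq|q'Q].
      by case: nCy; right; rewrite -eq.
    by exists q'.
  have ex1 : exists y, X y /\ ~ (C y \/ Zp q y).
    by exists x1; split=> // [[]].
  have [f [sf [y [sy nCy]]]] := IH _ (pclosed_union cC (Zp_closed q)) ex1 cov'.
  by exists f; split=> //; exists y; split=> // cy; apply: nCy; left.
have allZ' : forall x, X x -> ~ C x -> Zp q x.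
  by move=> y Xy nCy; apply: NNPP => nZ; apply: allZ; exists y.
case: (classic (exists x, X x /\ ~ C x /\ ~ Dp q x)) => [[x1 [X1 [nC1 nD1]]]|allD].
  have [f [fT hf]] := piece X1 (allZ' _ X1 nC1) nD1.
  exists f; split; last by exists x1; split=> //; apply: hf => //; apply: allZ'.
  split=> //; exists (fun v => C v \/ Dp q v); split; first exact: pclosed_union cC (Dp_closed q).
  split.
    by exists x1; split=> // [[]].
  move=> y Xy nCD; apply: hf => //.
    by apply: allZ' => // cy; apply: nCD; left.
  by move=> dy; apply: nCD; right.
apply: (IH C cC (ex_intro _ x (conj Xx nCx))) => y Xy nCy.
have [q' [q'Q [Zy Dy]]] := cov y Xy nCy.
move: q'Q; rewrite in_cons => /orP[/eqP eq|q'Q].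
  by case: allD; exists y; rewrite -eq.
by exists q'.
Qed.

Lemma top_lemma C : pclosed C -> (exists x, X x /\ ~ C x) ->
  exists f, supporting w s X f /\ exists y, stratum w s X f y /\ ~ C y.
Proof.
move=> cC ex; have H := topo (Q := enum {: PT}) cC ex.
apply: H => x Xx _.
have [q [Zq Dq]] := cover Xx.
by exists q; rewrite mem_enum.
Qed.

End Pieces.

Theorem lemma3p1 (k : closedFieldType) (n r : nat)
    (w : 'I_n -> 'I_r -> int) (s : 'I_r -> int)
    (I : {mpoly k[n]} -> Prop)
    (hI : forall p, I p -> homogeneous p)
    (hinv : forall t, in_torus t -> forall v,
        zeroset I v -> zeroset I (act w t v))
    (hfin : exists (m : nat) (l : 'I_m -> vec k n), forall v,
        fixedT w (zeroset I) v -> exists j, proj_eq v (l j))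
    (hS : forall v, fixedS w s (zeroset I) v <-> fixedT w (zeroset I) v) :
  let X := zeroset I in
  let F := supporting w s X in
  (forall x, X x <-> zclosure (fun y : vec k n => exists f : vec k n, F f /\ stratum w s X f y) x) /\
  (forall x, X x <-> exists f : vec k n, F f /\ zclosure (stratum w s X f) x) /\
  (forall f, F f -> (forall g, F g -> proj_eq g f) ->
     forall x, X x <-> zclosure (stratum w s X f) x).
Proof.
move=> X F.
have [m [l hl]] := hfin.
have cX : pclosed X by exists I.
have TL := top_lemma hI hinv hS hl.
have part1 : forall x, X x <-> zclosure (fun y => exists f, F f /\ stratum w s X f y) x.
  move=> x; split.
    move=> Xx; split; first by case: Xx.
    move=> C cC hC; apply: NNPP => nC.
    have [f [Ff [y [sy nCy]]]] := TL C cC (ex_intro _ x (conj Xx nC)).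
    by apply: nCy; apply: hC; exists f.
  by apply: zclosure_sub cX _ x => y [f [_ [Xy _]]].
split; first exact: part1.
split.
  move=> x; split; last first.
    by move=> [f [_ hx]]; apply: (zclosure_sub cX _ hx) => y [].
  move=> Xx; apply: NNPP => H.
  have H' : forall f, F f -> exists C, pclosed C /\
      (forall y, stratum w s X f y -> C y) /\ ~ C x.
    move=> f Ff; apply: NNPP => nex; apply: H; exists f; split=> //.
    split; first by case: Xx.
    move=> C cC hC; apply: NNPP => nC; apply: nex; exists C; split=> //.
  have gen : forall js : seq 'I_m, exists C, pclosed C /\ ~ C x /\
      forall f, F f -> (exists j, j \in js /\ proj_eq f (l j)) ->
      forall y, stratum w s X f y -> C y.
    elim=> [|j js [C [cC [nCx hC]]]].
      exists (fun _ => False); split; first exact: pclosed_empty.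
      by split=> // f _ [j []].
    case: (classic (exists f', F f' /\ proj_eq f' (l j))) => [[f' [Ff' ef']]|nf].
      have [C' [cC' [hC' nC'x]]] := H' f' Ff'.
      exists (fun v => C v \/ C' v); split; first exact: pclosed_union.
      split; first by case.
      move=> f Ff [j' [jin ef]] y sy; move: jin; rewrite in_cons => /orP[/eqP ejj|jin].
        right; apply: hC'; apply: stratum_trans sy _; subst j'.
        exact: proj_eq_trans ef (proj_eq_sym ef').
      by left; apply: hC Ff _ y sy; exists j'.
    exists C; split=> //; split=> // f Ff [j' [jin ef]] y sy.
    move: jin; rewrite in_cons => /orP[/eqP ejj|jin].
      by case: nf; exists f; subst j'.
    by apply: hC Ff _ y sy; exists j'.
  have [C [cC [nCx hC]]] := gen (enum 'I_m).
  apply: nCx; have [_ hz] := (part1 x).1 Xx; apply: (hz C cC).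
  move=> y [f [Ff sy]]; apply: (hC f Ff _ y sy).
  have [fT _] := Ff; have [j ej] := hl f fT.
  by exists j; rewrite mem_enum.
move=> f Ff hF x; split; last first.
  by move=> hx; apply: (zclosure_sub cX _ hx) => y [].
move=> Xx; split; first by case: Xx.
move=> C cC hC; have [_ hz] := (part1 x).1 Xx; apply: (hz C cC).
move=> y [g [Fg sy]]; apply: hC; exact: stratum_trans sy (hF g Fg).
Qed.
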